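(* If the Markov monoid of a probabilistic automaton $\mathcal{A}$ contains a non-simplicity witness, then $\mathcal{A}$ is not simple.
   Context: Fix a finite alphabet $A$ and a probabilistic automaton $\mathcal{A}=(Q,q_0,\Delta,F)$, $\Delta:Q\times A\to\mathcal{D}(Q)$. For $a\in A$ let $M_a(s,t)=\Delta(s,a)(t)$, for $u=a_0\cdots a_{n-1}$ let $M_u=M_{a_0}\cdots M_{a_{n-1}}$ (identity for the empty word), $\mathbb{P}_{\mathcal{A}}(s\xrightarrow{u}t)=M_u(s,t)$ and $\mathbb{P}_{\mathcal{A}}(s\xrightarrow{u}T)=\sum_{t\in T}\mathbb{P}_{\mathcal{A}}(s\xrightarrow{u}t)$. For $w\in A^\omega$, $w_{<k}$ is its prefix of length $k$. The process induced by $w\in A^\omega$ from $p\in Q$ is simple if there exist $\lambda>0$ and sequences $(A_k),(B_k)$ of subsets of $Q$ with $A_k\cap B_k=\emptyset$, $A_k\cup B_k=Q$ for all $k$, $\mathbb{P}_{\mathcal{A}}(p\xrightarrow{w_{<k}}q)\ge\lambda$ for all $k$ and $q\in A_k$, and $\lim_n\mathbb{P}_{\mathcal{A}}(p\xrightarrow{w_{<n}}B_n)=0$; $\mathcal{A}$ is simple if every such process (all $w$, all $p$) is simple. A limit-word is a map $\mathbf{u}:Q\times Q\to\{0,1\}$ such that every $s$ has some $t$ with $\mathbf{u}(s,t)=1$. Concatenation: $(\mathbf{u}\cdot\mathbf{v})(s,t)=1$ iff there is $q$ with $\mathbf{u}(s,q)=\mathbf{v}(q,t)=1$ (written $\mathbf{u}\mathbf{v}$).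 $\mathbf{u}$ is idempotent if $\mathbf{u}\mathbf{u}=\mathbf{u}$; for idempotent $\mathbf{u}$, $s$ is $\mathbf{u}$-recurrent if for all $t$, $\mathbf{u}(s,t)=1\Rightarrow\mathbf{u}(t,s)=1$, and $\mathbf{u}$-transient otherwise; $\mathbf{u}^\sharp(s,t)=1$ iff $\mathbf{u}(s,t)=1$ and $t$ is $\mathbf{u}$-recurrent. For $a\in A$, $\mathbf{a}(s,t)=1$ iff $\Delta(s,a)(t)>0$; $\mathbf{1}$ is the identity. The Markov monoid of $\mathcal{A}$ is the smallest set of limit-words containing $\{\mathbf{a}\mid a\in A\}\cup\{\mathbf{1}\}$ and closed under concatenation and iteration of idempotents. A non-simplicity witness is a triple $(\mathbf{u},\mathbf{v},\mathbf{w})$ of elements of the Markov monoid, with $\mathbf{v}$ idempotent, for which there exist states $r,t$ such that: $\mathbf{u}\mathbf{v}^\sharp\mathbf{w}$ is idempotent, $r$ is $\mathbf{u}\mathbf{v}^\sharp\mathbf{w}$-recurrent, $(\mathbf{u}\mathbf{v})(r,t)=1$, and $t$ is $\mathbf{v}$-transient. *)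

(* Defs.v *)
From HB Require Import structures.
From mathcomp Require Import all_boot all_order all_algebra.
From mathcomp Require Import all_classical all_reals all_analysis.
Set Implicit Arguments. Unset Strict Implicit. Unset Printing Implicit Defensive.
Import Order.TTheory GRing.Theory Num.Theory.
Import numFieldNormedType.Exports.
Local Open Scope ring_scope.

(* A probabilistic automaton (Q, q0, Delta, F) over a finite alphabet A;
   delta a s t = Delta(s, a)(t), and Delta(s, a) is a probability distribution. *)
Record PA (R : realType) (Q A : finType) := MkPA {
  q0 : Q;
  delta : A -> Q -> Q -> R;
  final : {set Q};
  delta_ge0 : forall a s t, 0 <= delta a s t;
  delta_sum1 : forall a s, \sum_(t : Q) delta a s t = 1
}.

Section Defs.
Context {R : realType} {Q A : finType} (aut : PA R Q A).

(* P(s --u--> t) = M_u(s,t), with M_{a0...a(n-1)} = M_{a0} ... M_{a(n-1)}. *)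
Fixpoint prob (s : Q) (u : seq A) (t : Q) : R :=
  match u with
  | [::] => (s == t)%:R
  | a :: u' => \sum_(q : Q) delta aut a s q * prob q u' t
  end.

Definition prob_set (s : Q) (u : seq A) (T : {set Q}) : R :=
  \sum_(t in T) prob s u t.

Definition prefix (w : nat -> A) (k : nat) : seq A := mkseq w k.

Definition simple_process (w : nat -> A) (p : Q) : Prop :=
  exists (lam : R), 0 < lam /\
  exists (As Bs : nat -> {set Q}),
    (forall k, [disjoint As k & Bs k] /\ As k :|: Bs k = [set: Q]) /\
    (forall k q, q \in As k -> lam <= prob p (prefix w k) q) /\
    ((fun n : nat => prob_set p (prefix w n) (Bs n)) @ \oo --> (0 : R))%classic.

Definition simple : Prop := forall (w : nat -> A) (p : Q), simple_process w p.

(* Limit-words are represented as boolean relations on Q. *)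
Definition limit_word (u : rel Q) : Prop := forall s, exists t, u s t.

Definition lw_cat (u v : rel Q) : rel Q := fun s t => [exists q, u s q && v q t].

Definition idempotent (u : rel Q) : Prop := forall s t, lw_cat u u s t = u s t.

Definition recurrent (u : rel Q) (s : Q) : bool := [forall t, u s t ==> u t s].

Definition transient (u : rel Q) (s : Q) : bool := ~~ recurrent u s.

Definition lw_sharp (u : rel Q) : rel Q := fun s t => u s t && recurrent u t.

Definition lw_letter (a : A) : rel Q := fun s t => 0 < delta aut a s t.

Definition lw_one : rel Q := fun s t => s == t.

Inductive markov_monoid : rel Q -> Prop :=
| mm_letter a : markov_monoid (lw_letter a)
| mm_one : markov_monoid lw_one
| mm_cat u v : markov_monoid u -> markov_monoid v -> markov_monoid (lw_cat u v)
| mm_sharp u : markov_monoid u -> idempotent u -> markov_monoid (lw_sharp u).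

Definition non_simplicity_witness (u v w : rel Q) : Prop :=
  markov_monoid u /\ markov_monoid v /\ markov_monoid w /\ idempotent v /\
  exists r t : Q,
    idempotent (lw_cat (lw_cat u (lw_sharp v)) w) /\
    recurrent (lw_cat (lw_cat u (lw_sharp v)) w) r /\
    lw_cat u v r t /\
    transient v t.

End Defs.

(* Main.v *)
Require Import Defs.
From HB Require Import structures.
From mathcomp Require Import all_boot all_order all_algebra.
From mathcomp Require Import all_classical all_reals all_analysis.
From mathcomp Require Import ring lra zify.
From Stdlib Require Import Lia.
Set Implicit Arguments. Unset Strict Implicit. Unset Printing Implicit Defensive.
Import Order.TTheory GRing.Theory Num.Theory.
Local Open Scope ring_scope.

Section Helpers.
Context {R : realType} {Q A : finType} (aut : PA R Q A).

Local Notation P := (Defs.prob aut).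

Lemma sum_sub_le (T : finType) (f : T -> R) (a : pred T) :
  (forall i, 0 <= f i) -> \sum_(i | a i) f i <= \sum_i f i.
Proof.
move=> f0; rewrite [X in _ <= X](bigID a) /= lerDl.
by apply: sumr_ge0 => i _; exact: f0.
Qed.

Lemma sum_pos_ex (T : finType) (f : T -> R) :
  0 < \sum_i f i -> exists i, 0 < f i.
Proof.
move=> h; apply/not_existsP => hn.
have : \sum_i f i <= 0.
  by apply: sumr_le0 => i _; rewrite leNgt; apply/negP => fi; exact: (hn i fi).
by rewrite leNgt h.
Qed.

Lemma P_ge0 s u t : 0 <= P s u t.
Proof.
elim: u s => [|a u IH] s /=; first by rewrite ler0n.
by apply: sumr_ge0 => q _; rewrite mulr_ge0 // delta_ge0.
Qed.

Lemma P_sum1 s u : \sum_t P s u t = 1.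
Proof.
elim: u s => [|a u IH] s /=.
  rewrite (bigD1 s) //= eqxx big1 ?addr0 // => i; rewrite eq_sym => /negPf -> //.
rewrite exchange_big /= -(delta_sum1 aut a s); apply: eq_bigr => q _.
by rewrite -mulr_sumr IH mulr1.
Qed.

Lemma P_le1 s u t : P s u t <= 1.
Proof.
rewrite -(P_sum1 s u) (bigD1 t) //= lerDl; apply: sumr_ge0 => i _; exact: P_ge0.
Qed.

Lemma P_cat s u v t : P s (u ++ v) t = \sum_q P s u q * P q v t.
Proof.
elim: u s => [|a u IH] s /=.
  rewrite (bigD1 s) //= eqxx mul1r big1 ?addr0 // => i; rewrite eq_sym => /negPf ->.
  by rewrite mul0r.
under eq_bigr do rewrite IH mulr_sumr.
rewrite exchange_big /=; apply: eq_bigr => q _; rewrite mulr_suml.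
by apply: eq_bigr => q' _; rewrite mulrA.
Qed.

Lemma P1 s a t : P s [:: a] t = delta aut a s t.
Proof.
rewrite /= (bigD1 t) //= eqxx mulr1 big1 ?addr0 // => i /negPf ->.
by rewrite mulr0.
Qed.

Lemma P_nil s t : P s [::] t = (s == t)%:R.
Proof. by []. Qed.

Lemma mass_le1 s u (C : pred Q) : \sum_(q | C q) P s u q <= 1.
Proof. rewrite -(P_sum1 s u); apply: sum_sub_le => i; exact: P_ge0. Qed.

Lemma conv_le s u (f : Q -> R) e : (forall q, f q <= e) ->
  \sum_q P s u q * f q <= e.
Proof.
move=> hf; apply: (@le_trans _ _ (\sum_q P s u q * e)).
  by apply: ler_sum => q _; apply: ler_wpM2l; [exact: P_ge0| exact: hf].
by rewrite -mulr_suml P_sum1 mul1r.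
Qed.

Lemma term_le (f : Q -> R) q : (forall i, 0 <= f i) -> f q <= \sum_i f i.
Proof.
move=> f0; rewrite (bigD1 q) //= lerDl; apply: sumr_ge0 => i _; exact: f0.
Qed.

Lemma term_le_in (f : Q -> R) (C : pred Q) q : (forall i, 0 <= f i) -> C q ->
  f q <= \sum_(i | C i) f i.
Proof.
move=> f0 Cq; rewrite (bigD1 q) //= lerDl; apply: sumr_ge0 => i _; exact: f0.
Qed.


Definition real (x : rel Q) (c e : R) (y : seq A) :=
  forall s t, (x s t -> c <= P s y t) /\ (~~ x s t -> P s y t <= e).

Lemma real_cat x1 x2 c1 c2 e1 e2 y1 y2 :
  real x1 c1 e1 y1 -> real x2 c2 e2 y2 -> 0 <= c1 -> 0 <= c2 ->
  0 <= e1 -> 0 <= e2 ->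
  real (lw_cat x1 x2) (c1 * c2) ((e1 + e2) *+ #|Q|) (y1 ++ y2).
Proof.
move=> r1 r2 c10 c20 e10 e20 s t; rewrite P_cat; split.
  move=> /existsP [q /andP [h1 h2]].
  apply: (@le_trans _ _ (P s y1 q * P q y2 t)); last first.
    by apply: term_le => i; rewrite mulr_ge0 ?P_ge0.
  by apply: ler_pM => //; [exact: (r1 s q).1 | exact: (r2 q t).1].
rewrite negb_exists => /forallP hq.
rewrite -sumr_const; apply: ler_sum => q _.
case: (boolP (x1 s q)) => h1.
  have h2 : ~~ x2 q t by move: (hq q); rewrite h1.
  apply: (@le_trans _ _ (1 * e2)); last by rewrite mul1r lerDr.
  by apply: ler_pM; rewrite ?P_ge0 ?P_le1 //; exact: (r2 q t).2.
apply: (@le_trans _ _ (e1 * 1)); last by rewrite mulr1 lerDl.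
by apply: ler_pM; rewrite ?P_ge0 ?P_le1 //; exact: (r1 s q).2.
Qed.

Definition closed (x : rel Q) (C : pred Q) := forall q q', C q -> x q q' -> C q'.

Lemma leak x c e y (C : pred Q) s S :
  real x c e y -> 0 <= e -> closed x C ->
  \sum_(q | C q) P s S q - e *+ #|Q| <= \sum_(q | C q) P s (S ++ y) q.
Proof.
move=> ry e0 cC.
have hq : forall q, C q -> 1 - e *+ #|Q| <= \sum_(q' | C q') P q y q'.
  move=> q Cq.
  have := P_sum1 q y; rewrite (bigID C) /= => h1.
  have : \sum_(i | ~~ C i) P q y i <= e *+ #|Q|.
    apply: (@le_trans _ _ (\sum_(i | ~~ C i) e)).
      apply: ler_sum => i nCi; apply: (ry q i).2; apply/negP => xqi.
      by move/negP: nCi; apply; exact: cC xqi.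
    rewrite -sumr_const; apply: sum_sub_le => _; exact: e0.
  move: h1; set a := \sum_(i | C i) _; set b := \sum_(i | ~~ C i) _ => h1 hb.
  lra.
under [X in _ <= X]eq_bigr do rewrite P_cat.
rewrite exchange_big /=.
under [X in _ <= X]eq_bigr do rewrite -mulr_sumr.
apply: (@le_trans _ _ (\sum_(q | C q) P s S q * \sum_(q' | C q') P q y q'));
  last by apply: sum_sub_le => i; rewrite mulr_ge0 ?sumr_ge0 // => *; exact: P_ge0.
apply: (@le_trans _ _ (\sum_(q | C q) P s S q * (1 - e *+ #|Q|)));
  last by apply: ler_sum => q Cq; apply: ler_wpM2l; [exact: P_ge0 | exact: hq].
rewrite -mulr_suml.
have := mass_le1 s S C; have : 0 <= \sum_(q | C q) P s S q by apply: sumr_ge0 => *; exact: P_ge0.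
have : 0 <= e *+ #|Q| by rewrite mulrn_wge0.
set m := \sum_(q | C q) _; set d := e *+ _ => *; nra.
Qed.

Lemma class_lower x c e y (C : pred Q) s S t :
  real x c e y -> (forall q, C q -> x q t) -> 0 <= c ->
  c * \sum_(q | C q) P s S q <= P s (S ++ y) t.
Proof.
move=> ry hC c0; rewrite P_cat mulr_sumr.
apply: (@le_trans _ _ (\sum_(q | C q) P s S q * P q y t)); last first.
  by apply: sum_sub_le => i; rewrite mulr_ge0 ?P_ge0.
apply: ler_sum => q Cq; rewrite mulrC; apply: ler_wpM2l; first exact: P_ge0.
exact: (ry q t).1 (hC q Cq).
Qed.

Lemma col_upper x c e y s S t :
  real x c e y -> (forall q, ~~ x q t) -> P s (S ++ y) t <= e.
Proof. by move=> ry h; rewrite P_cat; apply: conv_le => q; exact: (ry q t).2. Qed.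


Lemma small_eps (M : R) (p : R) : 0 < p -> 0 <= M ->
  exists e : R, 0 < e /\ e * M <= p /\ e <= p.
Proof.
move=> p0 M0; exists (p / (M + 1)).
have M1 : 0 < M + 1 by lra.
split; first by rewrite divr_gt0.
split.
  rewrite mulrAC ler_pdivrMr //; nra.
by rewrite ler_pdivrMr //; nra.
Qed.

Lemma min_pos (T : eqType) (f : T -> R) (l : seq T) :
  exists mu, 0 < mu /\ mu <= 1 /\ forall i, i \in l -> 0 < f i -> mu <= f i.
Proof.
elim: l => [|a l [mu [mu0 [mu1 H]]]]; first by exists 1; split => //; split.
case: (ltrP 0 (f a)) => fa.
  exists (Num.min mu (f a)); split; first by rewrite lt_min mu0.
  split; first by rewrite ge_min mu1.
  move=> i; rewrite in_cons => /orP [/eqP -> _|il fi]; first by rewrite ge_min lexx orbT.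
  by rewrite ge_min H.
exists mu; split => //; split => // i; rewrite in_cons => /orP [/eqP -> fi|]; last exact: H.
by move: fa; rewrite leNgt fi.
Qed.

Lemma delta_min : exists mu, 0 < mu /\ mu <= 1 /\
  forall a s t, 0 < delta aut a s t -> mu <= delta aut a s t.
Proof.
have [mu [m0 [m1 H]]] := min_pos (fun x : A * Q * Q => delta aut x.1.1 x.1.2 x.2)
  (enum {: A * Q * Q}).
exists mu; split => //; split => // a s t dp.
by apply: (H (a, s, t)) => //; rewrite mem_enum.
Qed.

Lemma idem_trans (x : rel Q) : Defs.idempotent x -> forall s q t, x s q -> x q t -> x s t.
Proof.
move=> idx s q t h1 h2; rewrite -idx; apply/existsP; exists q; by rewrite h1.
Qed.

Lemma rec_succ (x : rel Q) : (forall s q t, x s q -> x q t -> x s t) ->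
  forall q z, x q z -> exists2 r, x q r & recurrent x r.
Proof.
move=> tr q z xqz.
case: (@arg_minnP _ z (fun r => x q r) (fun r => #|finset (x r)|) xqz) => r xqr minr.
case: (boolP (recurrent x r)) => Hr; first by exists r.
move: Hr; rewrite /recurrent negb_forall => /existsP [w]; rewrite negb_imply => /andP [xrw _].
exists w; first exact: tr xqr xrw.
apply/forallP => w'; apply/implyP => xww'.
have sub : finset (x w') \subset finset (x r).
  by apply/fintype.subsetP => v; rewrite !inE => h; apply: tr xrw (tr _ _ _ xww' h).
have := minr w' (tr _ _ _ xqr (tr _ _ _ xrw xww')) => cardle.
have /eqP eqs : finset (x w') == finset (x r) by rewrite eqEcard sub cardle.
have : w \in finset (x r) by rewrite inE.
by rewrite -eqs inE.
Qed.

Definition pow (y : seq A) k := flatten (nseq k y).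

Lemma powS y k : pow y k.+1 = y ++ pow y k.
Proof. by []. Qed.

Lemma powSr y k : pow y k.+1 = pow y k ++ y.
Proof.
elim: k => [|k IH]; first by rewrite /pow /= cats0.
by rewrite [LHS]powS [in LHS]IH catA -powS.
Qed.


Lemma rec_closed (x : rel Q) : (forall s q t, x s q -> x q t -> x s t) ->
  forall q q', recurrent x q -> x q q' -> recurrent x q'.
Proof.
move=> tr q q' /forallP rq xqq'; apply/forallP => z; apply/implyP => xq'z.
have xqz := tr _ _ _ xqq' xq'z.
have := rq z; rewrite xqz /= => xzq; exact: tr xzq xqq'.
Qed.

Lemma pow1 y : pow y 1 = y.
Proof. by rewrite /pow /= cats0. Qed.

Lemma sharp_real x (c : R) : Defs.idempotent x -> 0 < c -> c <= 1 -> forall e : R, 0 < e ->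
  exists e' : R, 0 < e' /\ exists k, (0 < k)%N /\
    forall y, real x c e' y -> real (lw_sharp x) (c * c / 2) e (pow y k).
Proof.
move=> idx c0 c1 e e0.
have tr := idem_trans idx.
have ce0 : (0 : R) < c * e by rewrite mulr_gt0.
pose a := 4 / (c * e).
have a0 : 0 <= a by rewrite /a divr_ge0 // ltW.
have ha : a * (c * e) = 4 by rewrite /a divfK // gt_eqF.
pose k0 := Num.Def.archi_bound a.
have hk0 : a < k0%:R by exact: archi_boundP.
pose k := k0.+2.
have kk0 : k0%:R + 2 = k%:R :> R by rewrite /k -!natr1; lra.
have kce : 1 <= k%:R * (c * e / 4) by nra.
pose g := Num.min (c * e / 4) (Num.min (c / 2) (Num.min e (1 / 2))).
have g0 : 0 < g by rewrite /g !lt_min; apply/and3P; split; try apply/andP; try split; lra.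
have [g1 [g2 [g3 g4]]] : g <= c * e / 4 /\ g <= c / 2 /\ g <= e /\ g <= 1 / 2.
  by rewrite /g !ge_min !lexx !orbT.
clearbody g.
have [e' [e'0 [he'M he'g]]] := small_eps (M := (#|Q|)%:R * k%:R) g0 (mulr_ge0 (ler0n _ _) (ler0n _ _)).
exists e'; split => //; exists k; split => // y ry s t.
pose d := e' *+ #|Q|.
have hd : d = e' * (#|Q|)%:R by rewrite /d mulr_natr.
have d0 : 0 <= d by rewrite mulrn_wge0 // ltW.
have dk : k%:R * d <= g by rewrite hd; nra.
have k1 : 1 <= k%:R :> R by rewrite -kk0; have := ler0n R k0; lra.
have dg : d <= g by nra.
have T1 : g <= c * e / 4 by lra.
have T2 : d <= c * e / 4 by lra.
have rowd : forall q (C : pred Q), (forall q', C q' -> ~~ x q q') ->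
    \sum_(q' | C q') P q y q' <= d.
  move=> q C hC; apply: (@le_trans _ _ (\sum_(q' | C q') e')).
    by apply: ler_sum => q' Cq'; exact: (ry q q').2 (hC q' Cq').
  rewrite /d -sumr_const; apply: sum_sub_le => _; exact: ltW.
split.
- case/andP => xst rt.
  have [q xtq] : exists q, x t q.
    apply/not_existsP => hn.
    have : \sum_q' P t y q' <= d.
      by apply: (@le_trans _ _ (\sum_(q' | true) P t y q')) => //; apply: rowd => q' _; apply/negP; exact: hn.
    rewrite P_sum1; lra.
  have xtt : x t t by apply: (tr _ _ _ xtq); move/forallP: rt => /(_ q); rewrite xtq.
  have cl : closed x (x t) by move=> q1 q2 h1 h2; exact: tr h1 h2.
  have inv : forall j, c - j%:R * d <= \sum_(q | x t q) P s (pow y j.+1) q.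
    elim => [|j IH].
      rewrite mul0r subr0 pow1.
      apply: (@le_trans _ _ (P s y t)); first exact: (ry s t).1.
      by apply: term_le_in => // *; exact: P_ge0.
    rewrite powSr; have := leak s (pow y j.+1) ry (ltW e'0) cl.
    rewrite -/d -natr1; lra.
  rewrite /k powSr.
  have := class_lower (t := t) (C := x t) s (pow y k0.+1) ry _ (ltW c0).
  have : forall q, x t q -> x q t by move=> q1 h; move/forallP: rt => /(_ q1); rewrite h.
  move=> h1 /(_ h1) hcl.
  have := inv k0; have : k0%:R * d <= c / 2 by nra.
  move=> *; nra.
- rewrite negb_and; case: (boolP (x s t)) => xst /= hnr.
  + pose T := fun q => ~~ recurrent x q.
    have step : forall S, \sum_(q | T q) P s (S ++ y) q <=
        (1 - c) * \sum_(q | T q) P s S q + d.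
      move=> S.
      under eq_bigr do rewrite P_cat.
      rewrite exchange_big /=.
      under eq_bigr do rewrite -mulr_sumr.
      rewrite (bigID T) /=.
      apply: lerD.
        rewrite mulrC mulr_suml; apply: ler_sum => q Tq.
        apply: ler_wpM2l; first exact: P_ge0.
        move: (Tq); rewrite /T /recurrent negb_forall => /existsP [w].
        rewrite negb_imply => /andP [xqw _].
        have [r' xqr' rr'] := rec_succ tr xqw.
        have := P_sum1 q y; rewrite (bigID T) /=.
        have : P q y r' <= \sum_(i | ~~ T i) P q y i.
          by apply: term_le_in; [move=> *; exact: P_ge0| rewrite /T negbK].
        have := (ry q r').1 xqr'; lra.
      apply: (@le_trans _ _ (\sum_(i | ~~ T i) P s S i * d)).
        apply: ler_sum => q Tq; apply: ler_wpM2l; first exact: P_ge0.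
        apply: rowd => q' Tq'; apply/negP => xqq'.
        by move: Tq'; rewrite /T (rec_closed tr (negbNE Tq) xqq').
      rewrite -mulr_suml; have := mass_le1 s S (fun i => ~~ T i).
      have : 0 <= \sum_(i | ~~ T i) P s S i by apply: sumr_ge0 => *; exact: P_ge0.
      move=> *; nra.
    have inv : forall j, \sum_(q | T q) P s (pow y j) q <= e / 2 \/
        \sum_(q | T q) P s (pow y j) q <= 1 - j%:R * (c * e / 4).
      elim => [|j IH]; first by right; rewrite mul0r subr0; exact: mass_le1.
      rewrite powSr; have := step (pow y j).
      have : 0 <= \sum_(q | T q) P s (pow y j) q by apply: sumr_ge0 => *; exact: P_ge0.
      have hj : (j.+1)%:R = j%:R + 1 :> R by rewrite natr1.
      move: IH.
      move: (\sum_(q | T q) P s (pow y j) q) => m.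
      move: (\sum_(q | T q) P s (pow y j ++ y) q) => m'.
      move=> IH h0 hs.
      have c1' : 0 <= 1 - c by lra.
      case: (lerP m (e / 2)) => hh.
        have : 0 <= (1 - c) * (e / 2 - m) by apply: mulr_ge0; lra.
        move=> hp; left; lra.
      have : 0 <= c * (m - e / 2) by apply: mulr_ge0; lra.
      move=> hp; case: IH => IH; first by exfalso; lra.
      by right; lra.
    apply: (@le_trans _ _ (\sum_(q | T q) P s (pow y k) q)).
      by apply: term_le_in => // *; exact: P_ge0.
    case: (inv k); lra.
  + have cl : closed x (x s) by move=> q1 q2 h1 h2; exact: tr h1 h2.
    have inv : forall j, 1 - d - j%:R * d <= \sum_(q | x s q) P s (pow y j.+1) q.
      elim => [|j IH].
        rewrite mul0r subr0 pow1.
        have := P_sum1 s y; rewrite (bigID (x s)) /=.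
        have := rowd s (fun q => ~~ x s q) (fun q h => h); lra.
      rewrite powSr; have := leak s (pow y j.+1) ry (ltW e'0) cl.
      rewrite -/d -natr1; lra.
    have hk : k%:R = (k0.+1)%:R + 1 :> R by rewrite natr1.
    have dk' := dk; rewrite hk in dk'.
    rewrite /k.
    have := P_sum1 s (pow y k0.+2); rewrite (bigID (x s)) /=.
    have : P s (pow y k0.+2) t <= \sum_(i | ~~ x s i) P s (pow y k0.+2) i.
      by apply: term_le_in => // *; exact: P_ge0.
    have := inv k0.+1.
    lra.
Qed.


Definition realizable x := exists c : R, 0 < c /\ c <= 1 /\
  forall e : R, 0 < e -> exists y, real x c e y.

Lemma reify x : markov_monoid aut x -> realizable x.
Proof.
elim => [a | | u v _ [c1 [c10 [c11 H1]]] _ [c2 [c20 [c21 H2]]] | u _ [c [c0 [c1 H]]] idu].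
- have [mu [mu0 [mu1 H]]] := delta_min.
  exists mu; split => //; split => // e e0; exists [:: a] => s t; rewrite P1; split.
    by move=> h; exact: H.
  by rewrite /lw_letter -leNgt => h; apply: le_trans h (ltW e0).
- exists 1; split => //; split => // e e0; exists [::] => s t; rewrite P_nil /lw_one.
  by case: (s == t) => /=; split => // _; exact: ltW.
- exists (c1 * c2); split; first by rewrite mulr_gt0.
  split; first by rewrite mulr_ile1 // ltW.
  move=> e e0.
  have [e1 [e10 [he1 _]]] := small_eps (M := 2 * (#|Q|)%:R) e0 (mulr_ge0 (ler0n _ _) (ler0n _ _)).
  have [y1 r1] := H1 e1 e10; have [y2 r2] := H2 e1 e10.
  exists (y1 ++ y2).
  have := real_cat r1 r2 (ltW c10) (ltW c20) (ltW e10) (ltW e10).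
  have -> : (e1 + e1) *+ #|Q| = e1 * (2 * (#|Q|)%:R) by rewrite -mulr_natr; ring.
  move=> rr s t; have [h1 h2] := rr s t; split => // /h2 h; exact: le_trans h he1.
- exists (c * c / 2); split; first by rewrite divr_gt0 // mulr_gt0.
  split.
    have h : c * c <= 1 by rewrite mulr_ile1 // ltW.
    by rewrite ler_pdivrMr //; lra.
  move=> e e0.
  have [e' [e'0 [k [k0 Hk]]]] := sharp_real idu c0 c1 e0.
  have [y ry] := H e' e'0.
  by exists (pow y k); exact: Hk.
Qed.

End Helpers.

Section Words.
Variable T : Type.

Fixpoint catb (B : nat -> seq T) n := if n is m.+1 then catb B m ++ B m else [::].

Lemma catb_prefix B m n : (m <= n)%N -> exists r, catb B n = catb B m ++ r.
Proof.
elim: n => [|n IH]; first by rewrite leqn0 => /eqP ->; exists [::]; rewrite cats0.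
rewrite leq_eqVlt => /orP [/eqP ->|]; first by exists [::]; rewrite cats0.
rewrite ltnS => /IH [r' hr]; exists (r' ++ B n) => /=; by rewrite hr catA.
Qed.

Lemma size_catb B : (forall n, 0 < size (B n))%N -> forall n, (n <= size (catb B n))%N.
Proof.
move=> hB; elim => [|n IH] //=; rewrite size_cat; have := hB n; lia.
Qed.

Lemma nth_catb B x0 a b i : (i < size (catb B a))%N -> (a <= b)%N ->
  nth x0 (catb B a) i = nth x0 (catb B b) i.
Proof.
move=> hi /(catb_prefix B) [r ->]; by rewrite nth_cat hi.
Qed.

Lemma prefix_take B x0 : (forall n, 0 < size (B n))%N -> forall n m,
  (m <= size (catb B n))%N ->
  mkseq (fun i => nth x0 (catb B i.+1) i) m = take m (catb B n).
Proof.
move=> hB n m hm; apply: (@eq_from_nth _ x0).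
  by rewrite size_mkseq size_takel.
move=> i; rewrite size_mkseq => im; rewrite nth_mkseq // nth_take //.
have hs := size_catb hB.
case: (leqP i.+1 n) => h.
  by apply: nth_catb => //; exact: hs.
apply/esym/nth_catb; [lia | lia].
Qed.

Lemma mkseq_add (f : nat -> T) m j :
  mkseq f (m + j)%N = mkseq f m ++ mkseq (fun i => f (m + i)%N) j.
Proof.
rewrite /mkseq iotaD map_cat add0n; congr (_ ++ _).
by rewrite -[in iota m j](addn0 m) iotaDl -map_comp.
Qed.

End Words.

Lemma pow_pos (R : realType) (Q A : finType) (aut : PA R Q A) x (c e : R) V :
  Defs.idempotent x -> real aut x c e V -> 0 < c ->
  forall k q t, x q t -> c ^+ k.+1 <= Defs.prob aut q (pow V k.+1) t.
Proof.
move=> idx rV c0; elim => [|k IH] q t xqt; first by rewrite pow1 expr1; exact: (rV q t).1.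
move: (xqt); rewrite -idx => /existsP [m /andP [xqm xmt]].
rewrite powS P_cat.
apply: (@le_trans _ _ (Defs.prob aut q V m * Defs.prob aut m (pow V k.+1) t)); last first.
  by apply: term_le => i; rewrite mulr_ge0 ?P_ge0.
rewrite exprS; apply: ler_pM; [exact: ltW | exact: exprn_ge0 (ltW c0) | exact: (rV q m).1 | exact: IH].
Qed.

Unset Implicit Arguments.
Theorem proposition5p11 (R : realType) (Q A : finType) (aut : PA R Q A) :
  (exists u v w : rel Q, non_simplicity_witness aut u v w) -> ~ simple aut.
Proof.
move=> [u [v [w [mu_ [mv [mw [idv [r [t [idz [recz [uvrt trt]]]]]]]]]]]] simpl.
set z := lw_cat (lw_cat u (lw_sharp v)) w in idz recz.
have trz := idem_trans idz.
have [cu [cu0 [cu1 Ru]]] := reify mu_.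
have [cv [cv0 [cv1 Rv]]] := reify mv.
have [cw [cw0 [cw1 Rw]]] := reify mw.
pose cs := cv * cv / 2.
have cs0 : 0 < cs by rewrite /cs divr_gt0 // mulr_gt0.
pose cz := cu * cs * cw.
have cz0 : 0 < cz by rewrite /cz !mulr_gt0.
have cs1 : cs <= 1.
  have h : cv * cv <= 1 by rewrite mulr_ile1 // ltW.
  by rewrite /cs ler_pdivrMr //; lra.
have cz1 : cz <= 1.
  have h1 : cu * cs <= 1 by apply: mulr_ile1 => //; exact: ltW.
  by apply: mulr_ile1 => //; [apply: mulr_ge0|]; exact: ltW.
pose N := #|Q|.
pose h : R := 1 / 2.
have good : forall n : nat, exists b : seq A, (0 < size b)%N /\
   (exists rho : R, 0 <= rho /\ rho *+ #|Q| <= h ^+ n.+2 /\ real aut z cz rho b) /\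
   exists U X W (eta : R), b = U ++ X ++ W /\ 0 <= eta /\ eta <= h ^+ n.+2 /\
     real aut u cu eta U /\ (forall q, v q t -> 0 < Defs.prob aut q X t) /\
     (forall q, Defs.prob aut q X t <= eta).
  move=> n.
  pose M : R := ((2 * N%:R + 1) * N%:R * N%:R).
  have hp : 0 < h ^+ n.+2 by rewrite exprn_gt0 // /h; lra.
  have M0 : 0 <= M by rewrite /M !mulr_ge0 // addr_ge0 // mulr_ge0.
  have [eta [eta0 [etaM etah]]] := small_eps (M := M) hp M0.
  have [e' [e'0 [k [k0 Hk]]]] := sharp_real aut idv cv0 cv1 eta0.
  have [U rU] := Ru eta eta0.
  have [V rV] := Rv e' e'0.
  have [W rW] := Rw eta eta0.
  have rX := Hk V rV.
  have Vne : (0 < size V)%N.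
    case: V rV {rX} => // rV.
    move: trt; rewrite /transient /recurrent negb_forall => /existsP [t'].
    rewrite negb_imply => /andP [vtt' nvt't].
    have := (rV t t').1 vtt'; rewrite P_nil.
    case: eqP => [et|_]; last by move=> h0; have h1 : cv <= 0 := h0; lra.
    by move: vtt' nvt't; rewrite et => ->.
  exists (U ++ pow V k ++ W); split.
    case: k k0 {Hk rX} => // k _; rewrite powS !size_cat; move: Vne; clear; move: (size U) (size V) (size W) (size (pow V k)) => a b c d; lia.
  split.
    exists (((eta + eta) *+ #|Q| + eta) *+ #|Q|); split.
      by apply: mulrn_wge0; apply: addr_ge0; [apply: mulrn_wge0; apply: addr_ge0|]; exact: ltW.
    split.
      have -> : ((eta + eta) *+ #|Q| + eta) *+ #|Q| *+ #|Q| = eta * M.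
        have e : forall x : R, x *+ #|Q| = x * (#|Q|)%:R by move=> x; rewrite mulr_natr.
        rewrite (e (((eta + eta) *+ #|Q| + eta) *+ #|Q|)) (e ((eta + eta) *+ #|Q| + eta)) (e (eta + eta)).
        rewrite /M /N; ring.
      exact: etaM.
    rewrite catA; apply: real_cat; [apply: real_cat| | | | |] => //; try exact: ltW.
    - exact: mulr_ge0 (ltW cu0) (ltW cs0).
    - by apply: mulrn_wge0; apply: addr_ge0; exact: ltW.
  exists U, (pow V k), W, eta; split => //; split; first exact: ltW.
  split => //; split => //; split.
    case: k k0 {Hk rX} => // k _ q vqt.
    apply: lt_le_trans (pow_pos idv rV cv0 k vqt); exact: exprn_gt0.
  move=> q; apply: (rX q t).2; rewrite /lw_sharp negb_and; move: trt; rewrite /transient => ->; by rewrite orbT.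
have [B HB] := choice good.
have hBs : forall n, (0 < size (B n))%N by move=> n; case: (HB n).
have [a0 _] : exists a : A, True.
  by case: (B 0) (hBs 0) => // a l _; exists a.
pose wd := fun i => nth a0 (catb B i.+1) i.
have hsz := size_catb hBs.
have pre : forall n y y', B n = y ++ y' ->
    Defs.prefix wd (size (catb B n ++ y)) = catb B n ++ y.
  move=> n y y' hb.
  have hm : (size (catb B n ++ y) <= size (catb B n.+1))%N.
    by rewrite /= hb catA [X in (_ <= X)%N]size_cat leq_addr.
  rewrite /Defs.prefix (@prefix_take _ B a0 hBs n.+1 _ hm).
  by rewrite /= hb catA take_size_cat.
have hcr : forall q, z r q -> z q r by move=> q zq; move/forallP: recz => /(_ q); rewrite zq.
have zrr : z r r.
  have [rho0 [rho00 [rhoh rz]]] := (HB 0).2.1.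
  have [q zrq] : exists q, z r q.
    apply/not_existsP => hn.
    have : \sum_q Defs.prob aut r (B 0) q <= rho0 *+ #|Q|.
      rewrite -sumr_const; apply: ler_sum => q _; apply: (rz r q).2; apply/negP; exact: hn.
    rewrite P_sum1; move: rhoh; rewrite /h expr2; move: (rho0 *+ #|Q|) => a h1 h2; lra.
  exact: trz zrq (hcr q zrq).
have cl : closed z (z r) by move=> q1 q2; exact: trz.
have inv : forall n, 1/2 + h ^+ n.+1 <= \sum_(q | z r q) Defs.prob aut r (catb B n) q.
  elim => [|n IH].
    rewrite /= expr1 /h; apply: (@le_trans _ _ (Defs.prob aut r [::] r)).
      rewrite P_nil eqxx /=; lra.
    by apply: term_le_in => // *; exact: P_ge0.
  have [rho [rho0 [rhoh rz]]] := (HB n).2.1.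
  rewrite /=; have := leak r (catb B n) rz rho0 cl.
  rewrite [h ^+ n.+2]exprS in rhoh *.
  move: IH rhoh; move: (h ^+ n.+1) => p; rewrite /h => *; lra.
have rlow : forall n, cz / 2 <= Defs.prob aut r (catb B n) r.
  case => [|n]; first by rewrite /= eqxx /=; lra.
  have [rho [rho0 [rhoh rz]]] := (HB n).2.1.
  rewrite /=; have := class_lower (t := r) (C := z r) r (catb B n) rz hcr (ltW cz0).
  have := inv n; have : 0 <= h ^+ n.+1 by rewrite exprn_ge0 // /h; lra.
  move: (\sum_(q | z r q) Defs.prob aut r (catb B n) q) => ms; move=> *; nra.
move: uvrt => /existsP [q0 /andP [urq0 vq0t]].
have [lam [lam0 [As [Bs [part [big lim]]]]]] := simpl wd r.
have [mu [mu0 [mu1 Hmu]]] := delta_min aut.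
pose eps := Num.min (cu * cz / 2) (lam * mu).
have eps0 : 0 < eps.
  rewrite /eps lt_min; apply/andP; split; last exact: mulr_gt0.
  by rewrite divr_gt0 // mulr_gt0.
have [K HK] : exists K, forall k, (K <= k)%N ->
    prob_set aut r (Defs.prefix wd k) (Bs k) < eps.
  move/cvgrPdist_lt: lim => /(_ eps eps0) [K _ HK]; exists K => k kK.
  have := HK k kK; rewrite /= sub0r normrN ger0_norm //.
  by apply: sumr_ge0 => *; exact: P_ge0.
have inB : forall k (S : {set Q}) q, q \in S ->
    Defs.prob aut r (Defs.prefix wd k) q <= prob_set aut r (Defs.prefix wd k) S.
  by move=> k S q qS; rewrite /prob_set; apply: term_le_in => // *; exact: P_ge0.
have inA : forall k q, q \notin Bs k -> q \in As k.
  move=> k q nq; have : q \in As k :|: Bs k by rewrite (part k).2 inE.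
  by rewrite finset.in_setU (negbTE nq) orbF.
have pos2 : forall a b : R, 0 <= a -> 0 <= b -> 0 < a * b -> 0 < a /\ 0 < b.
  move=> a b a0' b0 ab; split; rewrite lt_def ?a0' ?b0 andbT; apply/negP => /eqP e;
    by move: ab; rewrite e ?mul0r ?mulr0 ltxx.
pose seg m j := mkseq (fun i => wd (m + i)%N) j.
have prefD : forall m j, Defs.prefix wd (m + j)%N = Defs.prefix wd m ++ seg m j.
  by move=> m j; exact: mkseq_add.
have prop : forall m, (K <= m)%N -> forall j q t', q \notin Bs m ->
    0 < Defs.prob aut q (seg m j) t' -> t' \notin Bs (m + j)%N.
  move=> m Km; elim => [|j IH] q t' nq.
    rewrite /seg /= addn0; case: eqP => [<- _ //|_ /=]; by rewrite ltxx.
  have segS : seg m j.+1 = seg m j ++ [:: wd (m + j)%N].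
    by rewrite /seg -addn1 mkseq_add; congr (_ ++ _); rewrite /mkseq /= addn0.
  rewrite segS P_cat => /sum_pos_ex [z0]; rewrite P1 => hz.
  have [hz1 hz2] := pos2 _ _ (P_ge0 _ _ _ _) (delta_ge0 _ _ _ _) hz.
  have zA := inA _ _ (IH _ _ nq hz1).
  have lz := big _ _ zA.
  apply/negP => tB.
  have := HK (m + j.+1)%N (leq_trans Km (leq_addr _ _)).
  have := inB (m + j.+1)%N (Bs (m + j.+1)%N) t' tB.
  rewrite -addn1 addnA prefD /seg.
  have e1 : mkseq (fun i => wd (m + j + i)%N) 1 = [:: wd (m + j)%N] by rewrite /mkseq /= addn0.
  rewrite e1 P_cat.
  have : lam * mu <= Defs.prob aut r (Defs.prefix wd (m + j)%N) z0 * delta aut (wd (m + j)%N) z0 t'.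
    by apply: ler_pM; [exact: ltW | exact: ltW | exact: lz | exact: Hmu].
  have : Defs.prob aut r (Defs.prefix wd (m + j)%N) z0 * delta aut (wd (m + j)%N) z0 t' <=
      \sum_q Defs.prob aut r (Defs.prefix wd (m + j)%N) q * Defs.prob aut q [:: wd (m + j)%N] t'.
    apply: (@le_trans _ _ (Defs.prob aut r (Defs.prefix wd (m + j)%N) z0 *
        Defs.prob aut z0 [:: wd (m + j)%N] t')); first by rewrite P1.
    by apply: term_le => i; rewrite mulr_ge0 ?P_ge0.
  have : eps <= lam * mu by rewrite /eps ge_min lexx orbT.
  move=> *; lra.
have [N1 HN1] : exists N1, forall n, (N1 <= n)%N -> h ^+ n < lam.
  have hh : `|h| < 1 by rewrite /h ger0_norm; lra.
  move/cvgrPdist_lt: (cvg_expr hh) => /(_ lam lam0) [N1 _ HN1]; exists N1 => n nN.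
  have := HN1 n nN; rewrite /= sub0r normrN ger0_norm //.
  by rewrite exprn_ge0 // /h; lra.
pose n := maxn K N1.
have [_ [_ [U [X [W [eta [bdef [eta0 [etah [rU [Xpos Xle]]]]]]]]]]] := HB n.
pose m := size (catb B n ++ U).
have hm : Defs.prefix wd m = catb B n ++ U by apply: (pre n U (X ++ W)).
have hmj : Defs.prefix wd (m + size X)%N = catb B n ++ U ++ X.
  have -> : (m + size X = size (catb B n ++ (U ++ X)))%N by rewrite /m !size_cat addnA.
  by apply: (pre n (U ++ X) W); rewrite bdef catA.
have hseg : seg m (size X) = X.
  have := prefD m (size X); rewrite hmj hm catA => e.
  by have := congr1 (drop m) e; rewrite !drop_size_cat.
have Km : (K <= m)%N.
  apply: leq_trans (leq_maxl K N1) _; apply: leq_trans (hsz n) _.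
  by rewrite /m size_cat leq_addr.
have nq0 : q0 \notin Bs m.
  apply/negP => qB.
  have := HK m Km; have := inB m (Bs m) q0 qB; rewrite hm P_cat.
  have : Defs.prob aut r (catb B n) r * Defs.prob aut r U q0 <=
      \sum_q Defs.prob aut r (catb B n) q * Defs.prob aut q U q0.
    by apply: term_le => i; rewrite mulr_ge0 ?P_ge0.
  have : cz / 2 * cu <= Defs.prob aut r (catb B n) r * Defs.prob aut r U q0.
    apply: ler_pM; [by rewrite divr_ge0 // ltW | exact: ltW | exact: rlow | exact: (rU r q0).1].
  have : eps <= cu * cz / 2 by rewrite /eps ge_min lexx.
  move=> *; lra.
have tnB := prop m Km (size X) q0 t nq0 (ltac:(by rewrite hseg; exact: Xpos q0 vq0t)).
have := big _ _ (inA _ _ tnB); rewrite hmj catA P_cat.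
have : \sum_q Defs.prob aut (r) (catb B n ++ U) q * Defs.prob aut q X t <= eta.
  by apply: conv_le.
have := HN1 n.+2 (leq_trans (leq_maxr K N1) (leqW (leqnSn n))).
move=> *; lra.
Qed.
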